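(* Let $2\le n<m$. Suppose $\lambda$ is a characteristic matrix (resp. real characteristic matrix) on $C^{n+1}(m+1)^*$ of the block form $$\lambda=\begin{pmatrix}1 & a_2\ \cdots\ a_{m+1}\\ \mathbf{0} & A\end{pmatrix},$$ where $\mathbf{0}$ is the zero column of length $n$ and $A$ is an $n\times m$ matrix. Then $A$ is a characteristic matrix (resp. real characteristic matrix) on $C^n(m)^*$.
   Context: For $2\le n<m$, $C^n(m)^*$ is the dual of the cyclic polytope $C^n(m)$, a simple $n$-polytope with facets $F_1,\ldots,F_m$ labeled so that $F_{i_1},\ldots,F_{i_n}$ meet at a vertex iff $\{i_1,\ldots,i_n\}$ is a disjoint union of sets of the form $I_j=\{j,j+1\}\cap\{1,\ldots,m\}$, $j\in\{0,\ldots,m\}$ (dual Gale evenness condition); the same labeling convention is used for $C^{n+1}(m+1)^*$. A characteristic matrix on a simple $n$-polytope with facets $F_1,\ldots,F_m$ is an integer $n\times m$ matrix whose columns $\boldsymbol\lambda_{i_1},\ldots,\boldsymbol\lambda_{i_n}$ have determinant $\pm1$ whenever $F_{i_1},\ldots,F_{i_n}$ meet at a vertex; a real characteristic matrix is the analogue over $\mathbb{Z}/2$ with determinant $1$. *)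

(* Defs.v *)
From mathcomp Require Import all_boot all_order all_algebra.
Set Implicit Arguments. Unset Strict Implicit. Unset Printing Implicit Defensive.
Import GRing.Theory Num.Theory.
Local Open Scope ring_scope.

(* Facets of C^n(m)^* are indexed 0-based by 'I_m: facet F_{i+1} <-> i : 'I_m.
   For j in {0,...,m}, I_j = {j, j+1} ∩ {1,...,m}; in 0-based indices this is
   the set of i : 'I_m with i+1 = j or i+1 = j+1. *)
Definition gale_block (m : nat) (j : 'I_m.+1) : {set 'I_m} :=
  [set i : 'I_m | (i.+1 == j)%N || (i.+1 == j.+1)%N].

Definition gale_union (m : nat) (S : {set 'I_m}) : Prop :=
  exists P : {set {set 'I_m}},
    [/\ forall B, B \in P -> exists j : 'I_m.+1, B = gale_block j,
        trivIset P & cover P = S].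

(* The facets indexed by f 0, ..., f (n-1) meet at a vertex of C^n(m)^*
   (dual Gale evenness condition: the n indices form an n-element set that
   is a disjoint union of sets I_j). *)
Definition dual_cyclic_vertex (n m : nat) (f : 'I_n -> 'I_m) : Prop :=
  #|[set f k | k in 'I_n]| = n /\ gale_union [set f k | k in 'I_n].

Definition char_matrix_dual_cyclic (n m : nat) (M : 'M[int]_(n, m)) : Prop :=
  forall f : 'I_n -> 'I_m, dual_cyclic_vertex f ->
    \det (colsub f M) = 1 \/ \det (colsub f M) = -1.

Definition real_char_matrix_dual_cyclic (n m : nat) (M : 'M['F_2]_(n, m)) : Prop :=
  forall f : 'I_n -> 'I_m, dual_cyclic_vertex f -> \det (colsub f M) = 1.

Definition lower_right_block (R : Type) (n m : nat) (L : 'M[R]_(n.+1, m.+1))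
  : 'M[R]_(n, m) := \matrix_(i, j) L (lift ord0 i) (lift ord0 j).

(* Main.v *)
Require Import Defs.
From mathcomp Require Import all_boot all_order all_algebra.
Import GRing.Theory Num.Theory.
Set Implicit Arguments. Unset Strict Implicit.
Local Open Scope ring_scope.

Definition gext n m (f : 'I_n -> 'I_m) (k : 'I_n.+1) : 'I_m.+1 :=
  if unlift ord0 k is Some k' then lift ord0 (f k') else ord0.

Lemma det_gext (R : comNzRingType) n m (L : 'M[R]_(n.+1, m.+1)) (f : 'I_n -> 'I_m) :
  L ord0 ord0 = 1 -> (forall i : 'I_n, L (lift ord0 i) ord0 = 0) ->
  \det (colsub (gext f) L) = \det (colsub f (lower_right_block L)).
Proof.
move=> H0 H1; rewrite (expand_det_col _ ord0) big_ord_recl.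
rewrite big1 ?addr0; last first.
  by move=> i _; rewrite !mxE /gext unlift_none H1 mul0r.
rewrite !mxE /gext unlift_none H0 mul1r /cofactor addn0 expr0 mul1r.
congr (\det _); apply/matrixP => i j; rewrite !mxE /gext liftK //.
Qed.
Lemma disjI (T : finType) (A B : {set T}) :
  (forall x, x \in A -> x \in B -> False) -> [disjoint A & B].
Proof.
move=> H; rewrite -setI_eq0; apply/eqP/setP => x; rewrite !inE.
by apply/negbTE/negP => /andP[] /H H' /H'.
Qed.

Lemma B0E' M : gale_block (ord0 : 'I_M.+2) = [set ord0].
Proof. by apply/setP => x; rewrite !inE /=; case: x => [[|x] ?]. Qed.

Section G.
Variable M : nat.
Let sh (B : {set 'I_M.+1}) : {set 'I_M.+2} := [set lift ord0 x | x in B].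

Lemma sh_block (j : 'I_M.+2) : j != ord0 -> sh (gale_block j) = gale_block (lift ord0 j).
Proof.
move=> jn0; apply/setP => x; rewrite /sh.
case: (unliftP ord0 x) => [y ->|->].
  rewrite mem_imset ?inE; last exact: lift_inj.
  by rewrite /= /bump !leq0n.
have -> : (ord0 \in [set lift ord0 x | x in gale_block j]) = false.
  apply/negbTE/imsetP => -[y _] /eqP; by rewrite (negbTE (neq_lift _ _)).
rewrite inE /= /bump /= !add1n; case: j jn0 => [[|j] ?] //.
Qed.

Lemma B0E : gale_block (ord0 : 'I_M.+2) = [set ord0].
Proof. by apply/setP => x; rewrite !inE /=; case: x => [[|x] ?]. Qed.

Lemma B1E : ord0 |: sh [set ord0] = gale_block (lift ord0 (ord0 : 'I_M.+2)).
Proof.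
apply/setP => x; rewrite /sh imset_set1 !inE /= /bump /=.
by apply/idP/idP; case: x => [[|[|x]] ?].
Qed.

Lemma gale_ext (S : {set 'I_M.+1}) : gale_union S -> gale_union (ord0 |: sh S).
Proof.
case=> P [HP tP cP].
set B0 := [set ord0 : 'I_M.+1].
set X := if B0 \in P then ord0 |: sh B0 else [set ord0 : 'I_M.+2].
have lin : forall (y : 'I_M.+1) (C : {set 'I_M.+1}), (lift ord0 y \in sh C) = (y \in C).
  by move=> y C; rewrite mem_imset //; exact: lift_inj.
have XC : forall C, C \in P :\ B0 -> [disjoint X & sh C].
  move=> C; rewrite !inE => /andP [CB0 CP].
  apply: disjI => x; rewrite /X; case: ifP => B0P; rewrite !inE => Hx /imsetP[y yC Ex];
    subst x; move: Hx.
  - rewrite eq_sym (negbTE (neq_lift _ _)) /= lin inE => /eqP yE; subst y.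
    have := trivIsetP tP C B0 CP B0P CB0.
    move=> /disjointFr /(_ yC) H; by rewrite inE eqxx in H.
  - by rewrite eq_sym (negbTE (neq_lift _ _)).
exists (X |: [set sh B | B in P :\ B0]); split.
- move=> B; rewrite !inE => /orP [/eqP->|/imsetP[C]].
  + rewrite /X; case: ifP => _.
      by exists (lift ord0 ord0); exact: B1E.
    by exists ord0; rewrite B0E'.
  + rewrite !inE => /andP [CB0 /HP [j Ej]] ->; subst C.
    exists (lift ord0 j); apply: sh_block; apply: contra CB0 => /eqP ->.
    by rewrite B0E'.
- apply/trivIsetP => A B; rewrite !inE => /orP[/eqP->|/imsetP[C HC ->]] /orP[/eqP->|/imsetP[D HD ->]] AB.
  + by rewrite eqxx in AB.
  + exact: XC.
  + by rewrite disjoint_sym; exact: XC.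
  + rewrite imset_disjoint; last exact: lift_inj.
    move: HC HD; rewrite !inE => /andP[_ HC] /andP[_ HD].
    apply: (trivIsetP tP) => //; apply: contra AB => /eqP -> //.
- apply/setP => x; case: (unliftP ord0 x) => [y ->|->].
  + rewrite in_setU1 eq_sym (negbTE (neq_lift _ _)) /= lin -cP.
    apply/bigcupP/bigcupP.
    * move=> [B]; rewrite !inE => /orP[/eqP->|/imsetP[C HC ->]].
        rewrite /X; case: ifP => B0P; rewrite !inE.
          by rewrite eq_sym (negbTE (neq_lift _ _)) lin => yB; exists B0.
        by rewrite eq_sym (negbTE (neq_lift _ _)).
      by rewrite lin => yC; move: HC; rewrite !inE => /andP[_ HC]; exists C.
    * move=> [C HC yC]; case: (eqVneq C B0) => [CB|CB].
        subst C; exists X; first by rewrite !inE eqxx.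
        by rewrite /X HC !inE lin yC orbT.
      exists (sh C); last by rewrite lin.
      by rewrite !inE; apply/orP; right; apply/imsetP; exists C => //; rewrite !inE CB.
  + rewrite setU11; apply/bigcupP; exists X; first by rewrite !inE eqxx.
    by rewrite /X; case: ifP; rewrite !inE eqxx.
Qed.
End G.

Lemma vertex_gext n M (f : 'I_n -> 'I_M.+1) :
  dual_cyclic_vertex f -> dual_cyclic_vertex (gext f).
Proof.
case=> Hc Hg.
have E : [set gext f k | k in 'I_n.+1] =
         ord0 |: [set lift ord0 x | x in [set f k | k in 'I_n]].
  apply/setP => x; rewrite in_setU1; apply/imsetP/idP.
  - move=> [k _ ->]; rewrite /gext; case: (unliftP ord0 k) => [k' _|_].
      apply/orP; right; apply/imsetP; exists (f k') => //.
      by apply/imsetP; exists k'.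
    by rewrite eqxx.
  - case/orP => [/eqP ->| /imsetP [y /imsetP [k _ ->] ->]].
      by exists ord0 => //; rewrite /gext unlift_none.
    by exists (lift ord0 k) => //; rewrite /gext liftK.
split.
- rewrite E cardsU1.
  have -> : ord0 \notin [set lift ord0 x | x in [set f k | k in 'I_n]].
    by apply/imsetP => -[y _ /eqP]; rewrite (negbTE (neq_lift _ _)).
  by rewrite card_imset ?Hc //; exact: lift_inj.
- rewrite E; exact: gale_ext.
Qed.

Theorem lemma6p1 :
  (forall (n m : nat) (L : 'M[int]_(n.+1, m.+1)),
      (2 <= n)%N -> (n < m)%N ->
      L ord0 ord0 = 1 ->
      (forall i : 'I_n, L (lift ord0 i) ord0 = 0) ->
      char_matrix_dual_cyclic L ->
      char_matrix_dual_cyclic (lower_right_block L))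
  /\
  (forall (n m : nat) (L : 'M['F_2]_(n.+1, m.+1)),
      (2 <= n)%N -> (n < m)%N ->
      L ord0 ord0 = 1 ->
      (forall i : 'I_n, L (lift ord0 i) ord0 = 0) ->
      real_char_matrix_dual_cyclic L ->
      real_char_matrix_dual_cyclic (lower_right_block L)).
Proof.
split=> n m L n2 nm H00 H0 HL f Hf;
  (case: m => [|m] in L nm H00 H0 HL f Hf *;
   [ by case: (f (Ordinal (ltnW n2))) |
     rewrite -det_gext //; apply: HL; exact: vertex_gext ]).
Qed.
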